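(* Let $\xi(t)=(\xi_1(t),\dots,\xi_d(t))$, $t\geq 0$, be a continuous path in $\mathbb{R}^d$ such that the integrals $\int_0^t\xi(s)ds$ and $\int_0^t|\xi(s)|ds$ exist for all $t\geq0$. For $\nu\geq1$ and $1\leq i_1,\dots,i_\nu\leq d$ define \[ \Sigma^{i_1,\dots,i_\nu}(t)=\int_{0\leq s_1\leq\dots\leq s_\nu\leq t}\xi_{i_1}(s_1)\cdots\xi_{i_\nu}(s_\nu)\,ds_1\cdots ds_\nu . \] Suppose that \[ \limsup_{t\to\infty} t^{-1}\int_{0}^t|\xi(s)|ds=R<\infty \] and that the limit \[ \lim_{t\to\infty}t^{-1}\int_{0}^t\xi(s)ds=Q=(Q_1,\dots,Q_d) \] exists with $|Q|<\infty$. Then for any $\nu\geq 1$ and $1\leq i_1,\dots,i_\nu\leq d$, \[ \lim_{t\to\infty}t^{-\nu}\Sigma^{i_1,\dots,i_\nu}(t)=\frac 1{\nu !}\prod_{j=1}^\nu Q_{i_j}. \]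
   Context: $|\cdot|$ denotes the Euclidean norm on $\mathbb{R}^d$. *)

(* Defs.v *)
From Stdlib Require Import Reals List.
From Coquelicot Require Import Coquelicot.
Open Scope R_scope.

(* A path in R^d is represented by its coordinates xi i : R -> R, i < d
   (coordinates are indexed 0..d-1 instead of 1..d). *)

Definition path_norm (d : nat) (xi : nat -> R -> R) (s : R) : R :=
  sqrt (fold_right (fun i acc => (xi i s) ^ 2 + acc) 0 (List.seq 0 d)).

Definition cont_path (d : nat) (xi : nat -> R -> R) : Prop :=
  forall i, (i < d)%nat -> forall t, 0 <= t ->
    filterlim (xi i) (within (fun s => 0 <= s) (locally t)) (locally (xi i t)).

(* Iterated integral indexed by the REVERSED word:
   sigma_rev [i_nu; ...; i_1] t
     = int_0^t sigma_rev [i_{nu-1};...;i_1] (s) xi_{i_nu}(s) ds,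
   which is the integral over the simplex 0 <= s_1 <= ... <= s_nu <= t of
   xi_{i_1}(s_1) ... xi_{i_nu}(s_nu). *)
Fixpoint sigma_rev (xi : nat -> R -> R) (w : list nat) (t : R) : R :=
  match w with
  | nil => 1
  | i :: w' => RInt (fun s => sigma_rev xi w' s * xi i s) 0 t
  end.

Definition Sigma (xi : nat -> R -> R) (w : list nat) (t : R) : R :=
  sigma_rev xi (rev w) t.

(* Main.v *)
Require Import Defs.
From Stdlib Require Import Reals List Lra Lia.
From Coquelicot Require Import Coquelicot.
Open Scope R_scope.

Definition CC (f : R -> R) := forall x, continuous f x.

Lemma CC_ex f a b : CC f -> ex_RInt f a b.
Proof. intros H; apply (ex_RInt_continuous (V:=R_CompleteNormedModule)); intros; apply H. Qed.

Lemma CC_const c : CC (fun _ => c).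
Proof. intros x; apply continuous_const. Qed.
Lemma CC_id : CC (fun s => s).
Proof. intros x; apply continuous_id. Qed.
Lemma CC_mult f g : CC f -> CC g -> CC (fun s => f s * g s).
Proof. intros Hf Hg x; apply (continuous_mult f g x (Hf x) (Hg x)). Qed.
Lemma CC_plus f g : CC f -> CC g -> CC (fun s => f s + g s).
Proof. intros Hf Hg x; apply (continuous_plus f g x (Hf x) (Hg x)). Qed.
Lemma CC_minus f g : CC f -> CC g -> CC (fun s => f s - g s).
Proof. intros Hf Hg x; apply (continuous_minus f g x (Hf x) (Hg x)). Qed.
Lemma CC_abs f : CC f -> CC (fun s => Rabs (f s)).
Proof. intros Hf x; apply continuous_Rabs_comp, Hf. Qed.
Lemma CC_pow f n : CC f -> CC (fun s => f s ^ n).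
Proof.
  intros Hf; induction n; simpl.
  - apply CC_const.
  - apply CC_mult; auto.
Qed.
Lemma CC_RInt f : CC f -> CC (fun t => RInt f 0 t).
Proof.
  intros Hf x. apply (ex_derive_continuous (K:=R_AbsRing) (V:=R_NormedModule)). eexists.
  apply (is_derive_RInt (V:=R_CompleteNormedModule) f (fun t => RInt f 0 t) 0 x).
  - apply filter_forall; intros; apply RInt_correct, CC_ex, Hf.
  - apply Hf.
Qed.

Ltac cc := repeat (first [apply CC_minus | apply CC_plus | apply CC_mult | apply CC_abs | apply CC_const | apply CC_id | apply (CC_pow (fun s => s)) | assumption]).

Lemma RInt_mult_l f c a b : ex_RInt f a b -> RInt (fun s => c * f s) a b = c * RInt f a b.
Proof. intros H; exact (RInt_scal f a b c H). Qed.

Lemma RInt_plus' f g a b : ex_RInt f a b -> ex_RInt g a b ->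
  RInt (fun s => f s + g s) a b = RInt f a b + RInt g a b.
Proof. intros H1 H2; exact (RInt_plus f g a b H1 H2). Qed.

Lemma RInt_Chasles' f a b c : ex_RInt f a b -> ex_RInt f b c ->
  RInt f a b + RInt f b c = RInt f a c.
Proof. intros H1 H2; exact (RInt_Chasles f a b c H1 H2). Qed.

Lemma lim_intro (f : R -> R) (l : R) : (forall eps, 0 < eps -> exists M, forall t, M < t -> Rabs (f t - l) < eps) ->
  is_lim f p_infty l.
Proof.
  intros H. apply is_lim_spec. intros eps. destruct (H eps (cond_pos eps)) as [M HM].
  exists M; auto.
Qed.

Lemma lim_elim (f : R -> R) (l : R) : is_lim f p_infty l ->
  forall eps, 0 < eps -> exists M, forall t, M < t -> Rabs (f t - l) < eps.
Proof.
  intros H eps He. apply is_lim_spec in H; simpl in H. destruct (H (mkposreal eps He)) as [M HM].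
  exists M; auto.
Qed.

Lemma pow_ge1 t n : 1 <= t -> t <= t ^ S n.
Proof.
  intros Ht. induction n. simpl; lra.
  change (t ^ S (S n)) with (t * t ^ S n).
  assert (0 <= t ^ S n) by (apply pow_le; lra). nra.
Qed.

Lemma lemG (h e : R -> R) (k : nat) (B T : R) : CC h -> CC e ->
  (forall t, T <= t -> 0 < t -> RInt (fun s => Rabs (h s)) 0 t <= B * t) ->
  (forall eps, 0 < eps -> exists M, forall s, M <= s -> Rabs (e s) <= eps * s ^ k) ->
  is_lim (fun t => RInt (fun s => e s * h s) 0 t / t ^ (S k)) p_infty 0.
Proof.
  intros Ch Ce HB HE. apply lim_intro. intros eps Heps.
  set (B' := Rabs B + 1).
  assert (HB' : 0 < B') by (unfold B'; pose proof (Rabs_pos B); lra).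
  destruct (HE (eps / (2 * B'))) as [M0 HM0].
  { apply Rdiv_lt_0_compat; lra. }
  set (M := Rmax (Rmax M0 T) 1).
  assert (HM1 : 1 <= M) by apply Rmax_r.
  assert (HMT : T <= M) by (unfold M; eapply Rle_trans; [apply Rmax_r|apply Rmax_l]).
  assert (HMM0 : M0 <= M) by (unfold M; eapply Rle_trans; [apply Rmax_l|apply Rmax_l]).
  set (K := Rabs (RInt (fun s => e s * h s) 0 M)).
  assert (HK : 0 <= K) by apply Rabs_pos.
  exists (Rmax M (2 * K / eps + 1)). intros t Ht.
  assert (HtM : M < t) by (eapply Rle_lt_trans; [apply Rmax_l|exact Ht]).
  assert (HtK : 2 * K / eps + 1 < t) by (eapply Rle_lt_trans; [apply Rmax_r|exact Ht]).
  assert (Ceh : CC (fun s => e s * h s)) by (apply CC_mult; auto).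
  assert (Cah : CC (fun s => Rabs (h s))) by (apply CC_abs; auto).
  rewrite <- (RInt_Chasles' _ 0 M t) by (apply CC_ex; auto).
  set (tk := t ^ k).
  assert (Htk : 0 <= tk) by (apply pow_le; lra).
  assert (I2 : Rabs (RInt (fun s => e s * h s) M t) <= eps / (2 * B') * tk * (B' * t)).
  { eapply Rle_trans. apply abs_RInt_le; [lra| apply CC_ex; auto].
    eapply Rle_trans. apply (RInt_le _ (fun s => eps / (2 * B') * tk * Rabs (h s))).
    - lra.
    - apply CC_ex, CC_abs; auto.
    - apply CC_ex, CC_mult; [apply CC_const| auto].
    - intros s Hs. rewrite Rabs_mult. apply Rmult_le_compat_r. apply Rabs_pos.
      eapply Rle_trans. apply HM0; lra.
      apply Rmult_le_compat_l. apply Rlt_le, Rdiv_lt_0_compat; lra.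
      unfold tk; apply pow_incr; lra.
    - rewrite RInt_mult_l by (apply CC_ex; auto).
      apply Rmult_le_compat_l. apply Rmult_le_pos; auto. apply Rlt_le, Rdiv_lt_0_compat; lra.
      assert (0 <= RInt (fun s => Rabs (h s)) 0 M).
      { apply RInt_ge_0. lra. apply CC_ex; auto. intros; apply Rabs_pos. }
      pose proof (HB t ltac:(lra) ltac:(lra)).
      rewrite <- (RInt_Chasles' _ 0 M t) in H0 by (apply CC_ex; auto).
      assert (B * t <= B' * t). { apply Rmult_le_compat_r. lra. unfold B'. pose proof (Rle_abs B). lra. }
      lra. }
  assert (I1 : Rabs (RInt (fun s => e s * h s) 0 M) <= K) by (unfold K; lra).
  assert (E : eps / (2 * B') * tk * (B' * t) = eps / 2 * t ^ S k).
  { unfold tk. simpl. field. lra. }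
  rewrite E in I2.
  assert (Ht1 : 1 <= t) by lra.
  pose proof (pow_ge1 t k Ht1) as Hp.
  assert (Hpos : 0 < t ^ S k) by lra.
  rewrite Rminus_0_r.
  unfold Rdiv at 1. rewrite Rabs_mult, Rabs_inv, (Rabs_pos_eq (t ^ S k)) by lra.
  apply (Rmult_lt_reg_r (t ^ S k)); auto.
  rewrite Rmult_assoc, Rinv_l, Rmult_1_r by lra.
  pose proof (Rabs_triang (RInt (fun s : R => e s * h s) 0 M) (RInt (fun s : R => e s * h s) M t)).
  assert (K < eps / 2 * t).
  { assert (2 * K / eps < t) by lra.
    apply (Rmult_lt_compat_l (eps/2)) in H0; [|lra].
    replace (eps / 2 * (2 * K / eps)) with K in H0 by (field; lra). lra. }
  assert (eps / 2 * t <= eps / 2 * t ^ S k) by (apply Rmult_le_compat_l; lra).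
  lra.
Qed.
From Stdlib Require Import Lia.

Lemma RInt_extR (f g : R -> R) a b : (forall x, Rmin a b < x < Rmax a b -> f x = g x) ->
  RInt f a b = RInt g a b.
Proof. intros H; exact (RInt_ext f g a b H). Qed.

Lemma lim_congr (f : R -> R) (l l' : R) : is_lim f p_infty l -> l = l' -> is_lim f p_infty l'.
Proof. intros H ->; exact H. Qed.

Lemma lim_scal (f : R -> R) (a l : R) : is_lim f p_infty l -> is_lim (fun t => a * f t) p_infty (a * l).
Proof. intros H; exact (is_lim_scal_l f a p_infty l H). Qed.

Lemma lim_ext_pos (f g : R -> R) (l : R) : (forall t, 0 < t -> f t = g t) ->
  is_lim f p_infty l -> is_lim g p_infty l.
Proof. intros H; apply is_lim_ext_loc. exists 0. auto. Qed.

Lemma RInt_one t : RInt (fun s => Rabs 1) 0 t = t.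
Proof.
  rewrite (RInt_ext _ (fun _ => 1)) by (intros; apply Rabs_R1).
  rewrite RInt_const. unfold scal; simpl; unfold mult; simpl. ring.
Qed.

Lemma RInt_powk t k : RInt (fun s => s ^ k) 0 t = t ^ S k / INR (S k).
Proof.
  rewrite (is_RInt_unique _ _ _ _ (is_RInt_pow 0 t k)).
  change (t ^ S k / INR (S k) - 0 ^ S k / INR (S k) = t ^ S k / INR (S k)).
  rewrite pow_i by lia. unfold Rdiv. ring.
Qed.

Lemma lemC (g : R -> R) (k : nat) (L : R) : CC g ->
  (forall eps, 0 < eps -> exists M, forall s, M <= s -> Rabs (g s - L * s ^ k) <= eps * s ^ k) ->
  is_lim (fun t => RInt g 0 t / t ^ (S k)) p_infty (L / INR (S k)).
Proof.
  intros Cg HE.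
  assert (Ce : CC (fun s => g s - L * s ^ k)).
  { apply CC_minus; auto. apply CC_mult. apply CC_const. apply (CC_pow (fun s => s)), CC_id. }
  pose proof (lemG (fun _ => 1) (fun s => g s - L * s ^ k) k 1 0 (CC_const 1) Ce) as HG.
  assert (Hb : forall t, 0 <= t -> 0 < t -> RInt (fun s => Rabs 1) 0 t <= 1 * t).
  { intros; rewrite RInt_one; lra. }
  specialize (HG Hb HE). cbv beta in HG.
  pose proof (is_lim_plus' _ _ p_infty _ _ HG (is_lim_const (L / INR (S k)) p_infty)) as H.
  apply (lim_congr _ (0 + L / INR (S k))); [|ring].
  eapply lim_ext_pos; [|exact H].
  intros t Ht. cbv beta.
  rewrite (RInt_extR (fun s => (g s - L * s ^ k) * 1) (fun s => g s + (- L) * s ^ k)) by (intros; ring).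
  rewrite RInt_plus', RInt_mult_l, RInt_powk by (apply CC_ex; cc).
  assert (t * t ^ k <> 0) by (apply (pow_nonzero t (S k)); lra).
  field. split; auto. apply not_0_INR; lia.
Qed.

Lemma is_derive_congr (f : R -> R) x (l l' : R) : is_derive f x l -> l = l' -> is_derive f x l'.
Proof. intros H ->; exact H. Qed.

Lemma lemP (f : R -> R) (Q : R) : CC f -> is_lim (fun t => RInt f 0 t / t) p_infty Q ->
  forall m, is_lim (fun t => RInt (fun s => s ^ m * f s) 0 t / t ^ (S m)) p_infty (Q / INR (S m)).
Proof.
  intros Cf HQ [|m].
  - apply (lim_congr _ Q); [|simpl; field].
    eapply lim_ext_pos; [|exact HQ]. intros t Ht.
    rewrite (RInt_extR (fun s => s ^ 0 * f s) f) by (intros; simpl; ring).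
    simpl; field; lra.
  - set (F := fun s => RInt f 0 s).
    assert (CF : CC F) by (apply CC_RInt; auto).
    assert (Cp : forall n, CC (fun s => s ^ n)) by (intros; apply (CC_pow (fun s => s)), CC_id).
    assert (IBP : forall t, RInt (fun s => s ^ S m * f s) 0 t =
                  t ^ S m * F t - INR (S m) * RInt (fun s => s ^ m * F s) 0 t).
    { intros t.
      pose proof (is_RInt_derive (V:=R_CompleteNormedModule) (fun s => s ^ S m * F s)
                    (fun s => INR (S m) * (s ^ m * F s) + s ^ S m * f s) 0 t) as HI.
      assert (HI' : is_RInt (fun s => INR (S m) * (s ^ m * F s) + s ^ S m * f s) 0 t
                     (t ^ S m * F t - 0 ^ S m * F 0)).
      { apply HI.
        - intros x _.
          eapply is_derive_congr.
          + apply (is_derive_mult (K:=R_AbsRing) (fun s => s ^ S m) F x).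
            * apply (is_derive_pow (fun s => s)). apply (is_derive_id (K:=R_AbsRing)).
            * apply (is_derive_RInt (V:=R_CompleteNormedModule) f F 0 x).
              -- apply filter_forall; intros; apply RInt_correct, CC_ex, Cf.
              -- apply Cf.
            * intros; apply Rmult_comm.
          + simpl. unfold plus, mult; simpl. unfold one; simpl. ring.
        - intros x _. apply CC_plus; apply CC_mult; auto.
          apply CC_const. apply CC_mult; auto. }
      apply (is_RInt_unique (V:=R_CompleteNormedModule)) in HI'.
      rewrite RInt_plus', RInt_mult_l in HI'.
      2: apply CC_ex, CC_mult; auto.
      2: apply CC_ex, CC_mult; [apply CC_const|apply CC_mult; auto].
      2: apply CC_ex, CC_mult; auto.
      rewrite pow_i in HI' by lia. lra. }
    assert (H2 : is_lim (fun t => RInt (fun s => s ^ m * F s) 0 t / t ^ S (S m)) p_infty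
                   (Q / INR (S (S m)))).
    { apply lemC. apply CC_mult; auto.
      intros eps Heps. destruct (lim_elim _ _ HQ eps Heps) as [M HM].
      exists (Rmax M 0 + 1). intros s Hs.
      assert (HsM : M < s) by (pose proof (Rmax_l M 0); lra).
      assert (Hs0 : 0 < s) by (pose proof (Rmax_r M 0); lra).
      replace (s ^ m * F s - Q * s ^ S m) with (s ^ S m * (F s / s - Q)).
      2: { simpl. field. lra. }
      rewrite Rabs_mult, (Rabs_pos_eq (s ^ S m)) by (apply pow_le; lra).
      rewrite Rmult_comm. apply Rmult_le_compat_r. apply pow_le; lra.
      apply Rlt_le, HM; auto. }
    pose proof (is_lim_minus' _ _ p_infty _ _ HQ (lim_scal _ (INR (S m)) _ H2)) as H.
    apply (lim_congr _ (Q - INR (S m) * (Q / INR (S (S m))))).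
    + eapply lim_ext_pos; [|exact H]. intros t Ht.
      rewrite IBP. unfold F. simpl.
      assert (t ^ m <> 0) by (apply pow_nonzero; lra).
      field. split; lra.
    + rewrite (S_INR (S m)). field. pose proof (pos_INR (S m)). lra.
Qed.

Lemma CC_ext f g : (forall x, f x = g x) -> CC f -> CC g.
Proof. intros E H x. apply (continuous_ext f g x E (H x)). Qed.

Lemma lemMain (d : nat) (f : nat -> R -> R) (Q : nat -> R) :
  (forall i, (i < d)%nat -> CC (f i)) ->
  (forall i, (i < d)%nat -> is_lim (fun t => RInt (f i) 0 t / t) p_infty (Q i)) ->
  (forall i, (i < d)%nat -> exists B T, forall t, T <= t -> 0 < t ->
        RInt (fun s => Rabs (f i s)) 0 t <= B * t) ->
  forall v, List.Forall (fun i => (i < d)%nat) v ->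
  CC (sigma_rev f v) /\
  is_lim (fun t => sigma_rev f v t / t ^ length v) p_infty
    (fold_right Rmult 1 (map Q v) / INR (Factorial.fact (length v))).
Proof.
  intros Cf Lf Bf v. induction v as [|i v IH]; intros Hv.
  - split.
    + intros x. exact (continuous_const 1 x).
    + apply (lim_congr _ 1). 2: simpl; field.
      eapply lim_ext_pos; [|apply (is_lim_const 1)]. intros t Ht. simpl. field.
  - inversion Hv as [|? ? Hi Hv']; subst.
    destruct (IH Hv') as [CS LS].
    assert (Cfi := Cf i Hi).
    split.
    + change (CC (fun t => RInt (fun s => sigma_rev f v s * f i s) 0 t)).
      apply CC_RInt. cc.
    + set (n := length v).
      set (c := fold_right Rmult 1 (map Q v) / INR (Factorial.fact n)).
      pose proof (lim_scal _ c _ (lemP (f i) (Q i) Cfi (Lf i Hi) n)) as H1.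
      destruct (Bf i Hi) as [B [T HB]].
      assert (Ce : CC (fun s => sigma_rev f v s - c * s ^ n)) by cc.
      pose proof (lemG (f i) (fun s => sigma_rev f v s - c * s ^ n) n B T Cfi Ce HB) as H2.
      assert (HE : forall eps, 0 < eps -> exists M, forall s, M <= s ->
                 Rabs (sigma_rev f v s - c * s ^ n) <= eps * s ^ n).
      { intros eps Heps. destruct (lim_elim _ _ LS eps Heps) as [M HM].
        exists (Rmax M 0 + 1). intros s Hs.
        assert (HsM : M < s) by (pose proof (Rmax_l M 0); lra).
        assert (Hs0 : 0 < s) by (pose proof (Rmax_r M 0); lra).
        assert (Hsn : s ^ n <> 0) by (apply pow_nonzero; lra).
        replace (sigma_rev f v s - c * s ^ n) with (s ^ n * (sigma_rev f v s / s ^ n - c))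
          by (field; auto).
        rewrite Rabs_mult, (Rabs_pos_eq (s ^ n)) by (apply pow_le; lra).
        rewrite Rmult_comm. apply Rmult_le_compat_r. apply pow_le; lra.
        apply Rlt_le, HM; auto. }
      specialize (H2 HE). cbv beta in H2.
      pose proof (is_lim_plus' _ _ p_infty _ _ H1 H2) as H.
      apply (lim_congr _ (c * (Q i / INR (S n)) + 0)).
      * eapply lim_ext_pos; [|exact H]. intros t Ht. cbv beta.
        change (sigma_rev f (i :: v) t) with (RInt (fun s => sigma_rev f v s * f i s) 0 t).
        change (length (i :: v)) with (S n).
        rewrite (RInt_extR (fun s => sigma_rev f v s * f i s)
                  (fun s => c * (s ^ n * f i s) + (sigma_rev f v s - c * s ^ n) * f i s))
          by (intros; ring).
        rewrite RInt_plus', RInt_mult_l by (apply CC_ex; cc).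
        assert (t ^ S n <> 0) by (apply pow_nonzero; lra).
        field. auto.
      * unfold c. change (length (i :: v)) with (S n).
        change (Factorial.fact (S n)) with (S n * Factorial.fact n)%nat.
        rewrite mult_INR. simpl (fold_right Rmult 1 (map Q (i :: v))).
        pose proof (INR_fact_neq_0 n). pose proof (pos_INR n).
        rewrite S_INR. field. split; lra.
Qed.

Definition ext0 (xi : nat -> R -> R) : nat -> R -> R := fun i s => xi i (Rmax 0 s).

Lemma CC_max0 : CC (fun s => Rmax 0 s).
Proof.
  apply (CC_ext (fun s => (s + Rabs s) * / 2)).
  - intros x. unfold Rmax, Rabs. destruct (Rle_dec 0 x); destruct (Rcase_abs x); lra.
  - cc.
Qed.

Lemma ext0_CC d xi : cont_path d xi -> forall i, (i < d)%nat -> CC (ext0 xi i).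
Proof.
  intros Hc i Hi x. unfold continuous, ext0.
  apply (filterlim_comp _ _ _ (fun s => Rmax 0 s) (xi i) (locally x)
           (within (fun s => 0 <= s) (locally (Rmax 0 x)))).
  - intros P HP. unfold within in HP.
    pose proof (CC_max0 x _ HP) as H. unfold filtermap in *.
    eapply filter_imp; [|exact H]. intros s Hs. apply Hs. apply Rmax_l.
  - apply Hc; auto. apply Rmax_l.
Qed.

Lemma sigma_ext0 xi v t : 0 <= t -> sigma_rev xi v t = sigma_rev (ext0 xi) v t.
Proof.
  revert t; induction v as [|i v IH]; intros t Ht; simpl; auto.
  apply RInt_extR. intros x Hx. rewrite Rmin_left, Rmax_right in Hx by lra.
  rewrite IH by lra. f_equal. unfold ext0. rewrite (Rmax_right 0 x) by lra. reflexivity.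
Qed.

Lemma fold_CC (g : nat -> R -> R) l : (forall i, In i l -> CC (g i)) ->
  CC (fun s => fold_right (fun i acc => g i s ^ 2 + acc) 0 l).
Proof.
  induction l as [|a l IH]; intros H; cbn [fold_right].
  - apply CC_const.
  - apply CC_plus. apply (CC_pow (g a)). apply H; simpl; auto.
    apply IH. intros; apply H; simpl; auto.
Qed.

Lemma fold_nonneg (g : nat -> R -> R) l s : 0 <= fold_right (fun i acc => g i s ^ 2 + acc) 0 l.
Proof.
  induction l; cbn [fold_right]. lra. pose proof (pow2_ge_0 (g a s)). lra.
Qed.

Lemma fold_ge (g : nat -> R -> R) l s i : In i l -> g i s ^ 2 <= fold_right (fun i acc => g i s ^ 2 + acc) 0 l.
Proof.
  induction l as [|a l IH]; cbn [fold_right In]; intros H. contradiction.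
  destruct H as [->|H].
  - pose proof (fold_nonneg g l s). lra.
  - pose proof (IH H). pose proof (pow2_ge_0 (g a s)). lra.
Qed.

Lemma abs_le_norm d (g : nat -> R -> R) i s : (i < d)%nat -> Rabs (g i s) <= path_norm d g s.
Proof.
  intros Hi. unfold path_norm. rewrite <- sqrt_Rsqr_abs. apply sqrt_le_1_alt.
  unfold Rsqr. replace (g i s * g i s) with (g i s ^ 2) by ring.
  apply fold_ge. apply in_seq. lia.
Qed.

Lemma prod_acc (l : list R) x : fold_right Rmult x l = x * fold_right Rmult 1 l.
Proof. induction l; simpl. ring. rewrite IHl. ring. Qed.

Lemma prod_rev (Q : nat -> R) w : fold_right Rmult 1 (map Q (rev w)) = fold_right Rmult 1 (map Q w).
Proof.
  induction w; simpl; auto.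
  rewrite map_app, fold_right_app. simpl. rewrite prod_acc, IHw. ring.
Qed.

Theorem theorem2p4 (d : nat) (xi : nat -> R -> R) (Q : nat -> R) :
  cont_path d xi ->
  (* limsup_{t->oo} t^{-1} int_0^t |xi(s)| ds < oo *)
  (exists (Rb T : R), forall t, T <= t -> 0 < t ->
      RInt (path_norm d xi) 0 t / t <= Rb) ->
  (* lim_{t->oo} t^{-1} int_0^t xi(s) ds = Q, componentwise *)
  (forall i, (i < d)%nat ->
      is_lim (fun t => RInt (xi i) 0 t / t) p_infty (Q i)) ->
  forall w : list nat, w <> nil -> List.Forall (fun i => (i < d)%nat) w ->
    is_lim (fun t => Sigma xi w t / t ^ (List.length w)) p_infty
      (fold_right Rmult 1 (map Q w) / INR (Factorial.fact (List.length w))).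
Proof.
  intros Hc [Rb [T HB]] HL w _ Hw.
  set (f := ext0 xi).
  assert (Cf : forall i, (i < d)%nat -> CC (f i)) by (apply ext0_CC; auto).
  assert (CN : CC (path_norm d f)).
  { intros x. unfold path_norm. apply continuous_sqrt_comp.
    apply (fold_CC f (seq 0 d)). intros i Hi. apply Cf. apply in_seq in Hi. lia. }
  assert (Lf : forall i, (i < d)%nat -> is_lim (fun t => RInt (f i) 0 t / t) p_infty (Q i)).
  { intros i Hi. eapply lim_ext_pos; [|apply (HL i Hi)]. intros t Ht. cbv beta.
    f_equal. apply RInt_extR. intros x Hx. rewrite Rmin_left, Rmax_right in Hx by lra.
    unfold f, ext0. rewrite Rmax_right by lra. reflexivity. }
  assert (Bf : forall i, (i < d)%nat -> exists B T, forall t, T <= t -> 0 < t ->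
        RInt (fun s => Rabs (f i s)) 0 t <= B * t).
  { intros i Hi. exists Rb, T. intros t HT Ht.
    eapply Rle_trans. apply RInt_le. lra. apply CC_ex; cc; apply Cf; auto. apply CC_ex, CN.
    intros x _. apply (abs_le_norm d f i x Hi).
    rewrite (RInt_extR (path_norm d f) (path_norm d xi)).
    - pose proof (HB t HT Ht). apply (Rmult_le_compat_r t) in H; [|lra].
      unfold Rdiv in H. rewrite Rmult_assoc, Rinv_l, Rmult_1_r in H by lra. exact H.
    - intros x Hx. rewrite Rmin_left, Rmax_right in Hx by lra.
      unfold path_norm, f, ext0. rewrite (Rmax_right 0 x) by lra. reflexivity. }
  destruct (lemMain d f Q Cf Lf Bf (rev w) (Forall_rev Hw)) as [_ H].
  rewrite length_rev, prod_rev in H.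
  eapply lim_ext_pos; [|exact H]. intros t Ht. cbv beta.
  unfold Sigma. rewrite (sigma_ext0 xi (rev w) t) by lra. reflexivity.
Qed.
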